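(* Let $M$ be a finite set of alternatives, $\mathcal{R}$ the set of weak preference orders on $M$, and $\varphi:\mathcal{R}\to\Delta(M)$ a mechanism. If $\varphi$ is separation monotonic, separation upper invariant, and separation lower invariant, then it is multi-separation strategyproof, i.e., for every multi-separation $(R,R')$, $\varphi(R)$ first order-stochastically dominates $\varphi(R')$ at $R$, and $\varphi(R')$ first order-stochastically dominates $\varphi(R)$ at $R'$.
   Context: A preference order is a complete, transitive relation $R$ on $M$; $a\,I\,b$ means $a\,R\,b$ and $b\,R\,a$; $a\,P\,b$ means $a\,R\,b$ and not $b\,R\,a$. Write $R$ as $M_1\,P\,\cdots\,P\,M_K$ where $(M_k)$ are the nonempty indifference classes ordered so that $a\,P\,b$ for $a\in M_k$, $b\in M_{k'}$, $k<k'$. For $A\subseteq M$, $\varphi_A(R)=\sum_{a\in A}(\varphi(R))_a$. A lottery $x$ first order-stochastically dominates $y$ at $R$ if $\sum_{j: j R a}x_j\ge\sum_{j: j R a}y_j$ for all $a\in M$. A multi-separation is a pair $(R,R')$ such that, with $R=M_1\,P\,\cdots\,P\,M_K$, there are integers $L_1,\dots,L_K\ge1$ and, for each $k$, a partition of $M_k$ into pairwise disjoint nonempty sets $M_k^1,\dots,M_k^{L_k}$ with $R'=M_1^1\,P'\,\cdots\,P'\,M_1^{L_1}\,P'\,M_2^1\,P'\,\cdots\,P'\,M_K^1\,P'\,\cdots\,P'\,M_K^{L_K}$ (indifference within each listed set). A separation is a pair $(R,R')$ such that there are $\kappa\in\{1,\dots,K\}$ and a partition of $M_\kappa$ into disjoint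 nonempty $M_\kappa^1,M_\kappa^2$ with $R'=M_1\,P'\,\cdots\,P'\,M_{\kappa-1}\,P'\,M_\kappa^1\,P'\,M_\kappa^2\,P'\,M_{\kappa+1}\,P'\,\cdots\,P'\,M_K$. Axioms, for every separation $(R,R')$: separation responsive: $\varphi_{M_\kappa^1}(R')\ge\varphi_{M_\kappa^1}(R)$ and $\varphi_{M_\kappa^2}(R')\le\varphi_{M_\kappa^2}(R)$; separation direct: if $\varphi_{M_k}(R)\ne\varphi_{M_k}(R')$ for some $k\in\{1,\dots,K\}$ then $\varphi_{M_\kappa^1}(R')\ne\varphi_{M_\kappa^1}(R)$ and $\varphi_{M_\kappa^2}(R')\ne\varphi_{M_\kappa^2}(R)$; separation monotonic: responsive and direct; separation upper invariant: $\varphi_{M_k}(R)=\varphi_{M_k}(R')$ for $k<\kappa$; separation lower invariant: $\varphi_{M_k}(R)=\varphi_{M_k}(R')$ for $k>\kappa$. *)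

(* Defs.v *)
From mathcomp Require Import all_boot all_order all_algebra.
Set Implicit Arguments. Unset Strict Implicit. Unset Printing Implicit Defensive.
Import Order.TTheory GRing.Theory Num.Theory.
Local Open Scope ring_scope.

Section Defs.
Variable (F : realFieldType) (M : finType).

Definition complete_rel (P : rel M) : Prop := forall a b, P a b || P b a.
Definition pref_order (P : rel M) : Prop := complete_rel P /\ transitive P.

Definition seq_partition (S : {set M}) (Ls : seq {set M}) : Prop :=
  [/\ (forall i, (i < size Ls)%N -> nth set0 Ls i != set0),
      (forall i j, (i < size Ls)%N -> (j < size Ls)%N -> i != j ->
          [disjoint nth set0 Ls i & nth set0 Ls j])
    & \bigcup_(X <- Ls) X = S].

(* P = Ms_0 P Ms_1 P ... P Ms_(K-1): Ms lists the indifference classes of P,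
   from best to worst (indices start at 0). *)
Definition ordered_classes (P : rel M) (Ms : seq {set M}) : Prop :=
  seq_partition setT Ms /\
  forall i j a b, (i < size Ms)%N -> (j < size Ms)%N ->
    a \in nth set0 Ms i -> b \in nth set0 Ms j -> P a b = (i <= j)%N.

(* (P, P') is a separation, with P = Ms_0 P ... P Ms_(K-1), splitting the
   class Ms_k into M1, M2, with P' = ... Ms_(k-1) P' M1 P' M2 P' Ms_(k+1) ... *)
Definition separation (P P' : rel M) (Ms : seq {set M}) (k : nat)
    (M1 M2 : {set M}) : Prop :=
  [/\ ordered_classes P Ms, (k < size Ms)%N,
      seq_partition (nth set0 Ms k) [:: M1; M2]
    & ordered_classes P' (take k Ms ++ M1 :: M2 :: drop k.+1 Ms)].

Definition multi_separation (P P' : rel M) : Prop :=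
  exists (Ms : seq {set M}) (Ls : seq (seq {set M})),
    [/\ ordered_classes P Ms, size Ls = size Ms,
        (forall k, (k < size Ms)%N -> seq_partition (nth set0 Ms k) (nth [::] Ls k))
      & ordered_classes P' (flatten Ls)].

Definition lottery (x : M -> F) : Prop :=
  (forall a, 0 <= x a) /\ \sum_(a : M) x a = 1.

Definition mechanism (phi : rel M -> M -> F) : Prop :=
  forall P, pref_order P -> lottery (phi P).

Definition phiA (phi : rel M -> M -> F) (P : rel M) (A : {set M}) : F :=
  \sum_(a in A) phi P a.

Definition separation_responsive (phi : rel M -> M -> F) : Prop :=
  forall P P' Ms k M1 M2, separation P P' Ms k M1 M2 ->
    phiA phi P M1 <= phiA phi P' M1 /\ phiA phi P' M2 <= phiA phi P M2.

Definition separation_direct (phi : rel M -> M -> F) : Prop :=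
  forall P P' Ms k M1 M2, separation P P' Ms k M1 M2 ->
    (exists2 k', (k' < size Ms)%N &
        phiA phi P (nth set0 Ms k') != phiA phi P' (nth set0 Ms k')) ->
    phiA phi P' M1 != phiA phi P M1 /\ phiA phi P' M2 != phiA phi P M2.

Definition separation_monotonic (phi : rel M -> M -> F) : Prop :=
  separation_responsive phi /\ separation_direct phi.

Definition separation_upper_invariant (phi : rel M -> M -> F) : Prop :=
  forall P P' Ms k M1 M2, separation P P' Ms k M1 M2 ->
    forall k', (k' < k)%N ->
      phiA phi P (nth set0 Ms k') = phiA phi P' (nth set0 Ms k').

Definition separation_lower_invariant (phi : rel M -> M -> F) : Prop :=
  forall P P' Ms k M1 M2, separation P P' Ms k M1 M2 ->
    forall k', (k < k')%N -> (k' < size Ms)%N ->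
      phiA phi P (nth set0 Ms k') = phiA phi P' (nth set0 Ms k').

Definition fosd (P : rel M) (x y : M -> F) : Prop :=
  forall a, \sum_(j | P j a) y j <= \sum_(j | P j a) x j.

Definition multi_separation_strategyproof (phi : rel M -> M -> F) : Prop :=
  forall P P', multi_separation P P' ->
    fosd P (phi P) (phi P') /\ fosd P' (phi P') (phi P).

End Defs.

(* Main.v *)
Require Import Defs.
From mathcomp Require Import all_boot all_order all_algebra.
From Stdlib Require Import FunctionalExtensionality.
From mathcomp Require Import zify.
Set Implicit Arguments. Unset Strict Implicit. Unset Printing Implicit Defensive.
Import Order.TTheory GRing.Theory Num.Theory.

Section SetAux.
Variable M : finType.
Implicit Types (Ms s Ls Ns : seq {set M}) (X Y C S : {set M}).

Definition bU s : {set M} := \bigcup_(X <- s) X.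
Definition rdisj (X Y : {set M}) := [disjoint X & Y].

Lemma bU_nil : bU [::] = set0. Proof. by rewrite /bU big_nil. Qed.
Lemma bU_cons X s : bU (X :: s) = X :|: bU s. Proof. by rewrite /bU big_cons. Qed.
Lemma bU_cat s1 s2 : bU (s1 ++ s2) = bU s1 :|: bU s2. Proof. by rewrite /bU big_cat. Qed.

Lemma in_bU s a : (a \in bU s) = has (fun X => a \in X) s.
Proof. elim: s => [|X s IH]; first by rewrite bU_nil inE. by rewrite bU_cons inE IH. Qed.

Lemma disj_bUl s X : all (fun Y => [disjoint Y & X]) s -> [disjoint bU s & X].
Proof.
elim: s => [|Y s IH] /=.
  by move=> _; rewrite bU_nil; apply: eq_disjoint0 => x; rewrite inE.
case/andP=> h1 h2; rewrite bU_cons -setI_eq0 setIUl setU_eq0 !setI_eq0 h1.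
exact: IH.
Qed.

Lemma disj_bUr s X : all (fun Y => [disjoint X & Y]) s -> [disjoint X & bU s].
Proof.
move=> h; rewrite disjoint_sym; apply: disj_bUl.
by apply: sub_all h => Y; rewrite disjoint_sym.
Qed.

Lemma disj_bU2 s1 s2 : allrel rdisj s1 s2 -> [disjoint bU s1 & bU s2].
Proof.
move=> h; apply: disj_bUl; apply: sub_all h => Y /= h; exact: disj_bUr.
Qed.

Lemma bU_neq0 s : s != [::] -> all (fun X => X != set0) s -> bU s != set0.
Proof. by case: s => [|X s] //= _ /andP [h _]; rewrite bU_cons setU_eq0 negb_and h. Qed.

Lemma partE S s : seq_partition S s <->
  [/\ all (fun X => X != set0) s, pairwise rdisj s & bU s = S].
Proof.
split.
  case=> h1 h2 h3; split => //.
    by apply/(all_nthP set0).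
  apply/(pairwiseP set0) => i j Hi Hj lt; apply: h2 => //.
  by rewrite neq_ltn lt.
case=> /(all_nthP set0) h1 /(pairwiseP set0) h2 h3; split => //.
move=> i j Hi Hj; rewrite neq_ltn => /orP [lt|lt]; first exact: h2.
rewrite disjoint_sym; exact: h2.
Qed.

Lemma part_uniq S Ls i j a : seq_partition S Ls -> (i < size Ls)%N -> (j < size Ls)%N ->
  a \in nth set0 Ls i -> a \in nth set0 Ls j -> i = j.
Proof.
case=> _ Hd _ Hi Hj ai aj; apply/eqP; apply: contraT => ne.
by rewrite (disjointFr (Hd i j Hi Hj ne) ai) in aj.
Qed.

Lemma part_ex S Ls a : seq_partition S Ls -> a \in S ->
  exists2 i, (i < size Ls)%N & a \in nth set0 Ls i.
Proof.
case=> _ _ Hu aS. have : a \in bU Ls by rewrite /bU Hu.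
by rewrite in_bU => /(has_nthP set0) [i Hi Ha]; exists i.
Qed.

Definition pos Ms a := find (fun X => a \in X) Ms.
Definition rel_of Ms : rel M := fun a b => (pos Ms a <= pos Ms b)%N.

Lemma pos_eq S Ms i a : seq_partition S Ms -> (i < size Ms)%N ->
  a \in nth set0 Ms i -> pos Ms a = i.
Proof.
move=> HP Hi Ha.
have hh : has (fun X => a \in X) Ms by apply/(has_nthP set0); exists i.
have h1 : (pos Ms a < size Ms)%N by rewrite /pos -has_find.
have h2 : a \in nth set0 Ms (pos Ms a) := nth_find set0 hh.
exact: part_uniq HP h1 Hi h2 Ha.
Qed.

Lemma oc_rel_of Ms : seq_partition setT Ms -> ordered_classes (rel_of Ms) Ms.
Proof.
move=> HP; split=> // i j a b Hi Hj Ha Hb.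
by rewrite /rel_of (pos_eq HP Hi Ha) (pos_eq HP Hj Hb).
Qed.

Lemma oc_eq P Ms : ordered_classes P Ms -> P = rel_of Ms.
Proof.
case=> HP H; apply: functional_extensionality => a.
apply: functional_extensionality => b.
have [i Hi Ha] := part_ex HP (in_setT a); have [j Hj Hb] := part_ex HP (in_setT b).
by rewrite (H i j a b) // /rel_of (pos_eq HP Hi Ha) (pos_eq HP Hj Hb).
Qed.

Lemma oc_pref P Ms : ordered_classes P Ms -> pref_order P.
Proof.
move=> Hoc; rewrite (oc_eq Hoc); split; first by move=> a b; exact: leq_total.
move=> b a c; rewrite /rel_of; exact: leq_trans.
Qed.

Lemma prefix_set P Ns m a : ordered_classes P Ns -> (m < size Ns)%N ->
  a \in nth set0 Ns m -> [set j | P j a] = bU (take m.+1 Ns).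
Proof.
move=> Hoc Hm Ha; have HP := Hoc.1; rewrite (oc_eq Hoc); apply/setP => j.
have [i Hi Hj] := part_ex HP (in_setT j).
have hh : has (fun X => j \in X) Ns by apply/(has_nthP set0); exists i.
by rewrite inE in_bU has_take // /rel_of (pos_eq HP Hm Ha) ltnS.
Qed.


Definition refinesZ Ms (Ls : seq (seq {set M})) :=
  size Ls = size Ms /\ forall p, p \in zip Ms Ls -> seq_partition p.1 p.2.

Lemma refinesE Ms (Ls : seq (seq {set M})) : size Ls = size Ms ->
  (forall k, (k < size Ms)%N -> seq_partition (nth set0 Ms k) (nth [::] Ls k)) ->
  refinesZ Ms Ls.
Proof.
move=> hs h; split => // p /(nthP (set0, [::])) [i Hi <-].
rewrite nth_zip //=; apply: h.
by move: Hi; rewrite size_zip hs minnn.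
Qed.

Lemma split_part C (L1 L2 : seq {set M}) : seq_partition C (L1 ++ L2) ->
  L1 != [::] -> L2 != [::] ->
  [/\ seq_partition C [:: bU L1; bU L2], seq_partition (bU L1) L1
    & seq_partition (bU L2) L2].
Proof.
move=> /partE [h1 h2 h3] n1 n2.
move: h1; rewrite all_cat => /andP [a1 a2].
move: h2; rewrite pairwise_cat => /and3P [r12 p1 p2].
split; apply/partE; split => //.
- by rewrite /= (bU_neq0 n1 a1) (bU_neq0 n2 a2).
- by rewrite /= !andbT; apply: disj_bU2.
- by rewrite !bU_cons bU_nil setU0 -bU_cat.
Qed.

Lemma part_split A C B X Z :
  seq_partition setT (A ++ C :: B) -> seq_partition C [:: X; Z] ->
  seq_partition setT (A ++ X :: Z :: B).
Proof.
move=> /partE [h1 h2 h3] /partE [g1 g2 g3].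
have eC : C = X :|: Z by rewrite -g3 !bU_cons bU_nil setU0.
have sX : X \subset C by rewrite eC subsetUl.
have sZ : Z \subset C by rewrite eC subsetUr.
move: h1; rewrite all_cat /= => /and3P [a1 _ a2].
move: g1 => /= /and3P [x0 z0 _].
move: h2; rewrite pairwise_cat allrel_consr pairwise_cons => /and3P [/andP [rA rAB] pA /andP [rCB pB]].
move: g2 => /= /andP [/andP [rXZ _] _].
apply/partE; split.
- by rewrite all_cat /= a1 a2 x0 z0.
- rewrite pairwise_cat !allrel_consr !pairwise_cons /= rXZ rAB pA pB /=.
  rewrite !andbT; apply/and3P; split; [apply/andP; split| |].
  + by apply: sub_all rA => Y /= h; apply: disjointWr h.
  + by apply: sub_all rA => Y /= h; apply: disjointWr h.
  + by apply: sub_all rCB => Y /= h; apply: disjointWl h.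
  + by apply: sub_all rCB => Y /= h; apply: disjointWl h.
- by rewrite -h3 !bU_cat !bU_cons eC; congr (_ :|: _); rewrite setUA.
Qed.

Lemma take_split A C B X Z m : C = X :|: Z ->
  bU (take m (A ++ C :: B)) = bU (take (m + (size A < m)) (A ++ X :: Z :: B)).
Proof.
move=> eC; rewrite !take_cat.
case: (ltngtP m (size A)) => hm.
- by rewrite addn0 hm.
- have -> : (m + true < size A) = false by rewrite addn1; apply/negbTE; rewrite -leqNgt; lia.
  have -> : m + true - size A = (m - size A).+1 by rewrite addn1; lia.
  case e: (m - size A) => [|n]; first by lia.
  by rewrite /= !bU_cat !bU_cons eC; congr (_ :|: _); rewrite setUA.
- by rewrite hm addn0 ltnn subnn /= !bU_cat !bU_nil.
Qed.

Definition meas (Ls : seq (seq {set M})) := sumn (map (fun L => (size L).-1) Ls).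

Lemma decomp Ms (Ls : seq (seq {set M})) : size Ls = size Ms ->
  has (fun L => 1 < size L)%N Ls ->
  exists A C B LA X Y rest LB,
    [/\ Ms = A ++ C :: B, Ls = LA ++ (X :: Y :: rest) :: LB & size LA = size A].
Proof.
move=> hs hh; set k := find (fun L => 1 < size L)%N Ls.
have hk : (k < size Ls)%N by rewrite -has_find.
have hL := nth_find [::] hh; rewrite -/k in hL.
move: hL; case e: (nth [::] Ls k) => [|X [|Y rest]] //= _.
exists (take k Ms), (nth set0 Ms k), (drop k.+1 Ms), (take k Ls), X, Y, rest, (drop k.+1 Ls).
split.
- by rewrite -drop_nth -?hs // cat_take_drop.
- by rewrite -e -drop_nth // cat_take_drop.
- by rewrite !size_take -hs.
Qed.

Lemma flat_single Ms (Ls : seq (seq {set M})) : refinesZ Ms Ls ->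
  all (fun X => X != set0) Ms -> ~~ has (fun L => 1 < size L)%N Ls -> flatten Ls = Ms.
Proof.
elim: Ms Ls => [|C Ms IH] [|L Ls] [hs hz] //; try by case: hs.
case: hs => hs /= /andP [c0 a0]; rewrite negb_or => /andP [hL hh].
rewrite (IH Ls) //; last first.
  by split => // p hp; apply: hz; rewrite in_cons hp orbT.
have := hz (C, L); rewrite in_cons eqxx => /(_ isT) /= /partE [_ _ hC].
move: hL hC; case: L {hz} => [|X [|Y r]] //= _ hC.
  by move: c0; rewrite -hC bU_nil eqxx.
by rewrite -hC bU_cons bU_nil setU0.
Qed.

Lemma split_core A C B (LA : seq (seq {set M})) L1 L2 LB :
  seq_partition setT (A ++ C :: B) -> size LA = size A ->
  refinesZ (A ++ C :: B) (LA ++ (L1 ++ L2) :: LB) ->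
  L1 != [::] -> L2 != [::] ->
  [/\ seq_partition setT (A ++ bU L1 :: bU L2 :: B),
      refinesZ (A ++ bU L1 :: bU L2 :: B) (LA ++ L1 :: L2 :: LB)
    & separation (rel_of (A ++ C :: B)) (rel_of (A ++ bU L1 :: bU L2 :: B))
        (A ++ C :: B) (size A) (bU L1) (bU L2)].
Proof.
move=> HP hA [hs hz] n1 n2.
have hC : seq_partition C (L1 ++ L2).
  by apply: (hz (C, L1 ++ L2)); rewrite zip_cat // mem_cat mem_head orbT.
have [s12 s1 s2] := split_part hC n1 n2.
have HP' := part_split HP s12.
split => //.
- split.
    by move: hs; rewrite !size_cat /= hA => /eqP; rewrite eqn_add2l => /eqP [->].
  move=> p; rewrite zip_cat // mem_cat => /orP [hp|].
    by apply: hz; rewrite zip_cat // mem_cat hp.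
  rewrite /= !in_cons => /orP [/eqP -> //|/orP [/eqP -> //|hp]].
  by apply: hz; rewrite zip_cat // mem_cat /= !in_cons hp !orbT.
- split.
  + exact: oc_rel_of.
  + by rewrite size_cat /= -addSnnS leq_addr.
  + by rewrite nth_cat ltnn subnn.
  + rewrite take_size_cat // drop_cat ltnNge leqnSn /= subSnn /= drop0.
    exact: oc_rel_of.
Qed.

End SetAux.

Lemma decomp_at (T : Type) (x0 : T) (s : seq T) k : (k < size s)%N ->
  exists A c B, [/\ s = A ++ c :: B, size A = k & nth x0 s k = c].
Proof.
move=> hk; exists (take k s), (nth x0 s k), (drop k.+1 s); split => //.
- by rewrite -drop_nth // cat_take_drop.
- by rewrite size_take hk.
Qed.

Lemma bU_flatten (M : finType) (A : seq {set M}) (LA : seq (seq {set M})) : size LA = size A ->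
  (forall p, p \in zip A LA -> seq_partition p.1 p.2) -> bU (flatten LA) = bU A.
Proof.
elim: A LA => [|C A IH] [|L LA] //= [hs] hz.
rewrite bU_cat bU_cons IH //; last by move=> p hp; apply: hz; rewrite in_cons hp orbT.
have /partE [_ _ ->] := hz (C, L) (mem_head _ _).
by [].
Qed.

Section Phi.
Variables (F : realFieldType) (M : finType) (phi : rel M -> M -> F).
Hypothesis Hmech : mechanism phi.
Hypothesis Hresp : separation_responsive phi.
Hypothesis Hup : separation_upper_invariant phi.
Hypothesis Hlow : separation_lower_invariant phi.
Local Open Scope ring_scope.

Lemma phiA_U P (A B : {set M}) : [disjoint A & B] ->
  phiA phi P (A :|: B) = phiA phi P A + phiA phi P B.
Proof. by move=> d; rewrite /phiA -bigU //; apply: eq_bigl => x; rewrite !inE. Qed.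

Lemma sumU P (s : seq {set M}) : pairwise (@rdisj M) s ->
  phiA phi P (bU s) = \sum_(Y <- s) phiA phi P Y.
Proof.
elim: s => [|Y s IH]; first by rewrite bU_nil big_nil /phiA big_set0.
rewrite pairwise_cons => /andP [h1 h2]; rewrite bU_cons big_cons phiA_U ?IH //.
exact: disj_bUr.
Qed.

Lemma sum_total Q (Ms : seq {set M}) : seq_partition setT Ms -> pref_order Q ->
  \sum_(i < size Ms) phiA phi Q (nth set0 Ms i) = 1.
Proof.
move=> /partE [_ pw hU] hQ.
rewrite -(big_mkord xpredT (fun i => phiA phi Q (nth set0 Ms i))) -(big_nth set0 xpredT (phiA phi Q)) -sumU // hU.
rewrite -(Hmech hQ).2 /phiA; apply: eq_bigl => x; by rewrite inE.
Qed.

Lemma step_class P P' Ms k X Z : separation P P' Ms k X Z ->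
  forall i, (i < size Ms)%N -> phiA phi P (nth set0 Ms i) = phiA phi P' (nth set0 Ms i).
Proof.
move=> Hs i Hi.
case: (ltngtP i k) => [lt|gt|e].
- exact: Hup Hs i lt.
- exact: Hlow Hs i gt Hi.
have [ocP Hk _ ocP'] := Hs.
have t1 := sum_total ocP.1 (oc_pref ocP).
have t2 := sum_total ocP.1 (oc_pref ocP').
rewrite -t2 (bigD1 (Ordinal Hk)) // [in RHS](bigD1 (Ordinal Hk)) //= in t1.
have eq : \sum_(j < size Ms | j != Ordinal Hk) phiA phi P (nth set0 Ms j) =
          \sum_(j < size Ms | j != Ordinal Hk) phiA phi P' (nth set0 Ms j).
  apply: eq_bigr => j hj.
  case: (ltngtP j k) => h; [exact: Hup Hs _ h | exact: Hlow Hs _ h (ltn_ord j) |].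
  have : j == Ordinal Hk by apply/eqP/val_inj.
  by rewrite (negbTE hj).
by rewrite e; move: t1; rewrite eq => /addIr.
Qed.

Lemma step_eq P P' Ms k X Z : separation P P' Ms k X Z ->
  forall m, phiA phi P (bU (take m Ms)) = phiA phi P' (bU (take m Ms)).
Proof.
move=> Hs m; have [ocP _ _ _] := Hs.
have /partE [_ pw _] := ocP.1.
move: pw; rewrite -{1}(cat_take_drop m Ms) pairwise_cat => /and3P [_ pw _].
rewrite !sumU //; apply: eq_big_seq => Y /mem_take /(nthP set0) [i Hi <-].
exact: step_class Hs i Hi.
Qed.

Lemma step_le P P' Ms k X Z : separation P P' Ms k X Z ->
  phiA phi P (bU (take k Ms) :|: X) <= phiA phi P' (bU (take k Ms) :|: X).
Proof.
move=> Hs; have [ocP Hk hXZ _] := Hs.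
have /partE [_ pw _] := ocP.1.
have d : [disjoint bU (take k Ms) & X].
  move: pw; rewrite -{1}(cat_take_drop k Ms) (drop_nth set0 Hk) pairwise_cat.
  rewrite allrel_consr => /and3P [/andP [h _] _ _].
  have sX : X \subset nth set0 Ms k.
    by move: hXZ => /partE [_ _ <-]; rewrite bU_cons subsetUl.
  apply: disjointWr sX _; exact: disj_bUl.
rewrite !phiA_U // (step_eq Hs k) lerD2l.
exact: (Hresp Hs).1.
Qed.

Lemma chain n : forall Ms (Ls : seq (seq {set M})), (meas Ls <= n)%N ->
  seq_partition setT Ms -> refinesZ Ms Ls ->
  forall P1, ordered_classes P1 (flatten Ls) -> forall m,
  phiA phi (rel_of Ms) (bU (take m Ms)) = phiA phi P1 (bU (take m Ms)).
Proof.
elim: n => [|n IH] Ms Ls hn HP HR P1 oc1 m;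
  (case: (boolP (has (fun L => 1 < size L)%N Ls)) => hh;
   [| have /partE [a0 _ _] := HP; by rewrite (oc_eq oc1) (flat_single HR a0 hh)]).
- have [A [C [B [LA [X [Y [rest [LB [eMs eLs hA]]]]]]]]] := decomp HR.1 hh.
  by move: hn; rewrite eLs /meas map_cat sumn_cat /=; lia.
- have [A [C [B [LA [X [Y [rest [LB [eMs eLs hA]]]]]]]]] := decomp HR.1 hh.
  subst Ms Ls.
  have [HP' HR' Hsep] := split_core (L1 := [:: X]) (L2 := Y :: rest) HP hA HR isT isT.
  have eC : C = bU [:: X] :|: bU (Y :: rest).
    have [_ _ hs _] := Hsep.
    by move: hs; rewrite nth_cat ltnn subnn /= => /partE [_ _ <-]; rewrite !bU_cons !bU_nil !setU0.
  rewrite (step_eq Hsep m) (take_split _ _ _ eC).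
  apply: (IH _ (LA ++ [:: X] :: (Y :: rest) :: LB)) => //.
    by move: hn; rewrite /meas !map_cat !sumn_cat /=; lia.
  by move: oc1; rewrite !flatten_cat.
Qed.

End Phi.

Theorem lemma6 (F : realFieldType) (M : finType) (phi : rel M -> M -> F) :
  mechanism phi ->
  separation_monotonic phi ->
  separation_upper_invariant phi ->
  separation_lower_invariant phi ->
  multi_separation_strategyproof phi.
Proof.
move=> Hmech [Hresp _] Hup Hlow P P' [Ms [Ls [ocP hs hparts ocP']]].
have HP := ocP.1.
have HR : refinesZ Ms Ls := refinesE hs hparts.
have ch := chain Hmech Hup Hlow (leqnn _) HP HR ocP'.
have eP := oc_eq ocP; subst P.
have sumE : forall (Q R : rel M) a, (\sum_(j | Q j a) phi R j = phiA phi R [set j | Q j a])%R.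
  by move=> Q R a; rewrite /phiA; apply: eq_bigl => j; rewrite inE.
split => a; rewrite !sumE.
- have [k Hk Ha] := part_ex HP (in_setT a).
  by rewrite (prefix_set (oc_rel_of HP) Hk Ha) ch.
have [k Hk Ha] := part_ex HP (in_setT a).
have hpk := hparts k Hk.
have [t Ht Hat] := part_ex hpk Ha.
have [A [C [B [eMs hA eC]]]] := decomp_at set0 Hk.
have hLk : (k < size Ls)%N by rewrite hs.
have [LA [L [LB [eLs hLA eL]]]] := decomp_at [::] hLk.
rewrite eC eL in hpk Ht Hat; rewrite eC in Ha.
subst Ms Ls.
have hAA : size LA = size A by rewrite hA hLA.
set FA := flatten LA.
have eFl : flatten (LA ++ L :: LB) = FA ++ L ++ flatten LB by rewrite flatten_cat.
have hm : (size FA + t < size (flatten (LA ++ L :: LB)))%N.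
  by rewrite eFl !size_cat; lia.
have ham : a \in nth set0 (flatten (LA ++ L :: LB)) (size FA + t).
  by rewrite eFl nth_cat ltnNge leq_addr /= addKn nth_cat Ht.
rewrite (prefix_set ocP' hm ham) eFl -addnS takeD take_size_cat // drop_size_cat //.
have eA : bU FA = bU A.
  apply: bU_flatten => // p hp; apply: HR.2.
  by rewrite zip_cat // mem_cat hp.
have eCL : bU L = C by move: hpk => /partE [_ _ ->].
have eT : bU (take k.+1 (A ++ C :: B)) = bU A :|: C.
  by rewrite -hA take_cat ltnNge leqnSn /= subSnn /= ?take0 bU_cat bU_cons bU_nil setU0.
case: (ltngtP t.+1 (size L)) => ht; last first.
- by rewrite ht take_size_cat // bU_cat eA eCL -eT ch.
- by lia.
rewrite take_cat ht bU_cat eA.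
set L1 := take t.+1 L; set L2 := drop t.+1 L.
have n1 : L1 != [::] by rewrite -size_eq0 size_take ht.
have n2 : L2 != [::] by rewrite -size_eq0 size_drop subn_eq0 -ltnNge.
have HR2 : refinesZ (A ++ C :: B) (LA ++ (L1 ++ L2) :: LB) by rewrite cat_take_drop.
have [HP' HR' Hsep] := split_core HP hAA HR2 n1 n2.
have sl := step_le Hmech Hresp Hup Hlow Hsep.
rewrite take_size_cat // in sl.
have oc' : ordered_classes P' (flatten (LA ++ L1 :: L2 :: LB)).
  suff -> : flatten (LA ++ L1 :: L2 :: LB) = flatten (LA ++ L :: LB) by [].
  by rewrite !flatten_cat /=; congr (_ ++ _); rewrite catA cat_take_drop.
have ch2 := chain Hmech Hup Hlow (leqnn _) HP' HR' oc' (size A).+1.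
have eT2 : bU (take (size A).+1 (A ++ bU L1 :: bU L2 :: B)) = bU A :|: bU L1.
  by rewrite take_cat ltnNge leqnSn /= subSnn /= ?take0 bU_cat bU_cons bU_nil setU0.
rewrite eT2 in ch2.
by apply: le_trans sl _; rewrite ch2.
Qed.
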